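(* Let $r\ge2$ and let $\tau$ be the substitution on $\{1,2,\dots,r\}$ defined by $\tau(i)=i(i+1)\cdots r\,1\,2\cdots(i-1)$ for $1\le i\le r$ (so $\tau(1)=12\cdots r$, $\tau(2)=23\cdots r1$, $\dots$, $\tau(r)=r12\cdots(r-1)$). For $1\le i\le r$ let $x^{(i)}$ be the fixed point of $\tau$ beginning with the letter $i$, and let $X$ be the one-sided subshift generated by $\tau$. Then each $x^{(i)}$ is distal in $X$: the only point of $X$ proximal to $x^{(i)}$ is $x^{(i)}$ itself. In particular each of the two fixed points of the Thue–Morse substitution ($r=2$) is distal.
   Context: $X$ is the shift-orbit closure in $\{1,\dots,r\}^{\mathbb N}$ of a fixed point of the (primitive) substitution $\tau$, with $T$ the shift map; it does not depend on the choice of fixed point. Two points $x,y\in X$ are proximal if for every $N>0$ there exists $n\in\mathbb N$ with $x_nx_{n+1}\cdots x_{n+N}=y_ny_{n+1}\cdots y_{n+N}$. A point $x\in X$ is distal if the only point of $X$ proximal to $x$ is $x$. *)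

(* Defs.v *)
From mathcomp Require Import all_boot.
Set Implicit Arguments. Unset Strict Implicit. Unset Printing Implicit Defensive.

Definition tau (r i : nat) : seq nat := [seq (i.-1 + k) %% r + 1 | k <- iota 0 r].

(* tau applied to an infinite sequence x = x_0 x_1 ...: the concatenation
   tau(x_0) tau(x_1) ...; since every tau(i) has length r, position m of the
   result is letter (m mod r) of tau(x_(m div r)). *)
Definition subst_seq (r : nat) (x : nat -> nat) : nat -> nat :=
  fun m => nth 0 (tau r (x (m %/ r))) (m %% r).

Definition is_fixed_point (r : nat) (x : nat -> nat) : Prop :=
  (forall n, 1 <= x n <= r) /\ subst_seq r x = x.

Definition in_orbit_closure (u y : nat -> nat) : Prop :=
  forall N, exists n, forall k, k <= N -> y k = u (n + k).

Definition proximal (x y : nat -> nat) : Prop :=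
  forall N, 0 < N -> exists n, forall k, k <= N -> x (n + k) = y (n + k).

Definition distal_in (X : (nat -> nat) -> Prop) (x : nat -> nat) : Prop :=
  forall y, X y -> proximal x y -> y = x.

(* Main.v *)
Require Import Defs.
From mathcomp Require Import all_boot.
From Stdlib Require Import FunctionalExtensionality.
From mathcomp Require Import zify.

Set Implicit Arguments. Unset Strict Implicit. Unset Printing Implicit Defensive.

Lemma nth_tau r a k : k < r -> nth 0 (tau r a) k = (a.-1 + k) %% r + 1.
Proof. by move=> hk; rewrite /tau (nth_map 0) ?size_iota // nth_iota. Qed.

Lemma divmod_small r A b : 0 < r -> b < r -> (A * r + b) %/ r = A /\ (A * r + b) %% r = b.
Proof. by move=> r0 hb; rewrite divnMDl // divn_small // addn0 modnMDl modn_small. Qed.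

Lemma stepA r (X : nat -> nat) : 2 <= r -> (forall m, X m = (X (m %/ r) + m %% r) %% r) ->
  forall w, w %% r != r.-1 -> X w.+1 = (X w + 1) %% r.
Proof.
move=> hr Hrec w hw.
have r0 : 0 < r by apply: leq_trans hr.
have hlt : (w %% r).+1 < r.
  move: (ltn_pmod w r0) hw; set t := w %% r => h1 /eqP h2; lia.
have e : w.+1 = w %/ r * r + (w %% r).+1 by rewrite addnS -divn_eq.
have [d1 m1] := divmod_small (w %/ r) r0 hlt.
rewrite Hrec e d1 m1 [X w]Hrec modnDml -addnA addn1.
by [].
Qed.

Lemma stepB r (X : nat -> nat) : 2 <= r -> (forall m, X m < r) ->
  (forall m, X m = (X (m %/ r) + m %% r) %% r) ->
  forall u, u %% r = r.-1 -> (u %/ r) %% r != r.-1 -> X u.+1 = (X u + 2) %% r.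
Proof.
move=> hr HX Hrec u hu hv.
have r0 : 0 < r by apply: leq_trans hr.
have e : u.+1 = (u %/ r).+1 * r + 0.
  rewrite addn0 mulSn addnC {1}(divn_eq u r) hu -addnS prednK //.
have [d1 m1] := divmod_small (u %/ r).+1 r0 r0.
rewrite Hrec e d1 m1 addn0 modn_small // (stepA hr Hrec hv).
rewrite [X u]Hrec hu modnDml -addnA addn2 prednK // -addSnnS.
by rewrite addn0 addnS -addSn modnDr.
Qed.

Lemma L1aux r (X : nat -> nat) : 2 <= r -> (forall m, X m < r) ->
  (forall m, X m = (X (m %/ r) + m %% r) %% r) ->
  forall P p j, (forall j', j' <= j.+1 -> X (P + j') = X (p + j')) ->
  (p + j) %% r = r.-1 -> ((p + j) %/ r) %% r != r.-1 -> P = p %[mod r].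
Proof.
move=> hr HX Hrec P p j H h1 h2.
case: (eqVneq ((P + j) %% r) r.-1) => hP.
  by apply/eqP; rewrite -(eqn_modDr j); apply/eqP; rewrite hP h1.
have a1 := stepA hr Hrec hP.
have b1 := stepB hr HX Hrec h1 h2.
have e0 := H j (leqnSn _).
have e1 := H j.+1 (leqnn _).
rewrite !addnS a1 b1 e0 in e1.
move/eqP: e1; rewrite eqn_modDl => /eqP.
case: r hr {HX Hrec h1 h2 hP a1 b1} => // [[//|[//|r']]] _.
by rewrite modn_small // modn_small.
Qed.

Lemma L1 r (X : nat -> nat) : 2 <= r -> (forall m, X m < r) ->
  (forall m, X m = (X (m %/ r) + m %% r) %% r) ->
  forall P p, (forall j, j <= 2 * r -> X (P + j) = X (p + j)) -> P = p %[mod r].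
Proof.
move=> hr HX Hrec P p H.
have r0 : 0 < r by apply: leq_trans hr.
set j0 := r.-1 - p %% r.
have hp : p %% r <= r.-1 by rewrite -ltnS prednK // ltn_pmod.
have ej : p + j0 = p %/ r * r + r.-1 by rewrite {1}(divn_eq p r) -addnA subnKC.
have hr1 : r.-1 < r by rewrite prednK.
have [d0 m0] := divmod_small (p %/ r) r0 hr1.
have j0lt : j0 < r by rewrite /j0; move: hr1; lia.
case: (eqVneq ((p %/ r) %% r) r.-1) => hq.
  have ej' : p + (j0 + r) = (p %/ r).+1 * r + r.-1 by rewrite addnA ej mulSn; lia.
  have [d1 m1] := divmod_small (p %/ r).+1 r0 hr1.
  apply: (L1aux hr HX Hrec (j := j0 + r)).
  - move=> j' hj'; apply: H; lia.
  - by rewrite ej' m1.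
  - rewrite ej' d1 -addn1 -modnDml hq addn1 prednK // modnn.
    by apply/eqP; lia.
apply: (L1aux hr HX Hrec (j := j0)).
- move=> j' hj'; apply: H; lia.
- by rewrite ej m0.
- by rewrite ej d0.
Qed.

Fixpoint W (r L : nat) : nat := if L is L'.+1 then r * W r L' + 2 * r else 0.

Lemma Xmul r (X : nat -> nat) : 0 < r -> (forall m, X m < r) ->
  (forall m, X m = (X (m %/ r) + m %% r) %% r) -> forall k, X (k * r) = X k.
Proof.
move=> r0 HX Hrec k; have [d m] := divmod_small k r0 r0.
by rewrite Hrec -[k * r]addn0 d m addn0 modn_small.
Qed.

Lemma LL r (X : nat -> nat) : 2 <= r -> (forall m, X m < r) ->
  (forall m, X m = (X (m %/ r) + m %% r) %% r) ->
  forall L P p, (forall j, j <= W r L -> X (P + j) = X (p + j)) -> P = p %[mod r ^ L].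
Proof.
move=> hr HX Hrec; have r0 : 0 < r by apply: leq_trans hr.
elim=> [|L IH] P p H; first by rewrite expn0 !modn1.
have h1 : P = p %[mod r].
  apply: (L1 hr HX Hrec) => j hj; apply: H => /=; lia.
set e := (r - p %% r) %% r.
have hpe : (p + e) %% r = 0.
  by rewrite /e modnDmr -modnDml subnKC ?modnn // ltnW // ltn_pmod.
have hPe : (P + e) %% r = 0 by rewrite -modnDml h1 modnDml.
have ep : p + e = (p + e) %/ r * r by rewrite {1}(divn_eq (p + e) r) hpe addn0.
have eP : P + e = (P + e) %/ r * r by rewrite {1}(divn_eq (P + e) r) hPe addn0.
have he : e < r by rewrite /e ltn_pmod.
have := IH ((P + e) %/ r) ((p + e) %/ r).
have key : forall j, j <= W r L -> X ((P + e) %/ r + j) = X ((p + e) %/ r + j).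
  move=> j hj.
  rewrite -(Xmul r0 HX Hrec ((P + e) %/ r + j)) -(Xmul r0 HX Hrec ((p + e) %/ r + j)).
  rewrite !mulnDl -eP -ep -!addnA; apply: H => /=.
  have : j * r <= W r L * r by rewrite leq_mul2r hj orbT.
  move: he; lia.
move=> /(_ key) hm.
rewrite expnSr.
apply/eqP; rewrite -(eqn_modDr e); apply/eqP.
by rewrite eP ep -!muln_modl hm.
Qed.

Lemma Sh r (X : nat -> nat) : 2 <= r ->
  (forall m, X m = (X (m %/ r) + m %% r) %% r) ->
  forall L q k, k < r ^ L -> X (q * r ^ L + k) + X 0 = X q + X k %[mod r].
Proof.
move=> hr Hrec; have r0 : 0 < r by apply: leq_trans hr.
elim=> [|L IH] q k hk.
  by move: hk; rewrite expn0 ltnS leqn0 => /eqP ->; rewrite muln1 addn0.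
have hk' : k %/ r < r ^ L by rewrite ltn_divLR // -expnSr.
have e : q * r ^ L.+1 + k = (q * r ^ L + k %/ r) * r + k %% r.
  by rewrite expnSr mulnA mulnDl -addnA -divn_eq.
have [d m] := divmod_small (q * r ^ L + k %/ r) r0 (ltn_pmod k r0).
rewrite e Hrec d m [X k]Hrec modnDml addnAC -modnDml IH // modnDml.
by rewrite [RHS]modnDmr addnA.
Qed.

Fixpoint ds (r f m : nat) : nat := if f is f'.+1 then m %% r + ds r f' (m %/ r) else 0.

Lemma ds0 r f : ds r f 0 = 0.
Proof. by elim: f => //= f IH; rewrite mod0n div0n IH. Qed.

Lemma ds_indep r : 2 <= r -> forall f m g, m <= f -> m <= g -> ds r f m = ds r g m.
Proof.
move=> hr; elim=> [|f IH] m g hf hg.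
  by move: hf; rewrite leqn0 => /eqP ->; rewrite !ds0.
case: g hg => [|g] hg.
  by move: hg; rewrite leqn0 => /eqP ->; rewrite !ds0.
rewrite /=; congr (_ + _); case: m hf hg => [|m] hf hg; first by rewrite div0n !ds0.
have := ltn_Pdiv hr (ltn0Sn m); rewrite ltnS => h.
by apply: IH; apply: leq_trans h _.
Qed.

Lemma ds_eq r : 2 <= r -> forall m, ds r m m = m %% r + ds r (m %/ r) (m %/ r).
Proof.
move=> hr m; rewrite (ds_indep hr (g := m.+1) (leqnn m) (leqnSn m)) /=.
congr (_ + _); apply: ds_indep => //; exact: leq_div.
Qed.

Theorem mainTheorem17 (r : nat) (hr : 2 <= r) (i : nat) (hi : 1 <= i <= r) :
  (exists x, is_fixed_point r x /\ x 0 = i) /\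
  (forall x, is_fixed_point r x -> x 0 = i ->
     distal_in (in_orbit_closure x) x).
Proof.
have r0 : 0 < r by apply: leq_trans hr.
split.
  exists (fun m => (i.-1 + ds r m m) %% r + 1); split; last first.
    by rewrite /= addn0 modn_small ?addn1 ?prednK //; lia.
  split=> [n|]; first by rewrite addn1 ltn_pmod.
  apply: functional_extensionality => m.
  rewrite /subst_seq nth_tau ?ltn_pmod // addn1 /=.
  rewrite !addn1 /= modnDml [ds r m m](ds_eq hr).
  by rewrite [m %% r + _]addnC addnA.
move=> x [Hrange Hfix] _ y Hy Hprox.
set X := fun m => (x m).-1.
have HX : forall m, X m < r.
  move=> m; rewrite /X; have := Hrange m; lia.
have Hrec : forall m, X m = (X (m %/ r) + m %% r) %% r.
  move=> m; rewrite /X -{1}Hfix /subst_seq nth_tau ?ltn_pmod // addn1 //.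
have key : forall L k, k < r ^ L -> (y k).-1 + X 0 = (y 0).-1 + X k %[mod r].
  move=> L k hk.
  have [n Hn] := Hprox (W r L).+1 (ltn0Sn _).
  have [q Hq] := Hy (n + W r L + r ^ L).
  have hm : q + n = 0 + n %[mod r ^ L].
    apply: (LL hr HX Hrec) => j hj.
    rewrite add0n -addnA /X -Hq; last by lia.
    by rewrite Hn //; lia.
  move/eqP: hm; rewrite eqn_modDr mod0n => /eqP hq0.
  have eq' : q = q %/ r ^ L * r ^ L by rewrite {1}(divn_eq q (r ^ L)) hq0 addn0.
  have e1 : (y k).-1 = X (q %/ r ^ L * r ^ L + k) by rewrite /X -eq' Hq //; lia.
  have e2 : (y 0).-1 = X (q %/ r ^ L * r ^ L + 0) by rewrite /X -eq' Hq //; lia.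
  have s1 := @Sh r X hr Hrec L (q %/ r ^ L) k hk.
  have rL : 0 < r ^ L by rewrite expn_gt0 r0.
  have s2 := @Sh r X hr Hrec L (q %/ r ^ L) 0 rL.
  rewrite e1 s1 e2.
  move/eqP: s2; rewrite eqn_modDr => /eqP h.
  by rewrite -[LHS]modnDml -h modnDml.
have key' : forall k, (y k).-1 + X 0 = (y 0).-1 + X k %[mod r].
  by move=> k; apply: (key k); apply: ltn_expl.
have [n0 Hn0] := Hprox 1 (ltnSn 0).
have h0 := key' (n0 + 0).
rewrite -Hn0 // -/(X (n0 + 0)) [(y 0).-1 + _]addnC in h0.
move/eqP: h0; rewrite eqn_modDl => /eqP h0.
have yr : forall k, 0 < y k <= r.
  move=> k; have [q Hq] := Hy k; rewrite Hq //.
apply: functional_extensionality => k.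
have := key' k; rewrite -[RHS]modnDml -h0 modnDml [_ + X k]addnC => /eqP.
rewrite eqn_modDr => /eqP.
rewrite !modn_small //; last by have := yr k; lia.
rewrite /X => e.
by have := yr k; have := Hrange k; lia.
Qed.
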